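(* Let $F\colon\mathcal{A}\to\mathcal{B}$ be an exceptionally Frobenius functor. Then the canonical map $$\varphi\colon R\xrightarrow{R\eta_L}RFL\xrightarrow{\eta_R^{-1}L}L$$ is an isomorphism.
   Context: All categories are $k$-linear triangulated, all functors exact. $F$ has left adjoint $L$ and right adjoint $R$, with units $\eta_R\colon\mathrm{id}_{\mathcal{A}}\to RF$ and $\eta_L\colon\mathrm{id}_{\mathcal{B}}\to FL$. $F$ is exceptional if it is fully faithful and has both adjoints; in that case $\eta_R$ is an isomorphism. $F$ is exceptionally Frobenius if it is exceptional and there exists some isomorphism $R\cong L$. *)

(* Defs.v *)
Set Implicit Arguments.
Unset Strict Implicit.

Record Category := {
  Ob :> Type;
  Hom : Ob -> Ob -> Type;
  cid : forall a, Hom a a;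
  comp : forall x y z, Hom y z -> Hom x y -> Hom x z;
  comp_id_l : forall a b (f : Hom a b), comp (cid b) f = f;
  comp_id_r : forall a b (f : Hom a b), comp f (cid a) = f;
  comp_assoc : forall a b c d (f : Hom c d) (g : Hom b c) (h : Hom a b),
      comp f (comp g h) = comp (comp f g) h
}.
Arguments Hom {c} _ _ : rename.
Arguments cid {c} _ : rename.
Arguments comp {c x y z} _ _ : rename.

Notation "g \o f" := (comp g f) (at level 40, left associativity).

Definition is_iso (C : Category) (a b : C) (f : Hom a b) : Prop :=
  exists g : Hom b a, g \o f = cid a /\ f \o g = cid b.

Record Functor (C D : Category) := {
  fobj :> C -> D;
  fmap : forall a b, Hom a b -> Hom (fobj a) (fobj b);
  fmap_id : forall a, fmap (cid a) = cid (fobj a);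
  fmap_comp : forall a b c (g : Hom b c) (f : Hom a b),
      fmap (g \o f) = fmap g \o fmap f
}.
Arguments fmap {C D} _ {a b} _.

Definition IdF (C : Category) : Functor C C.
Proof.
  refine {| fobj := fun a => a; fmap := fun a b f => f |}; reflexivity.
Defined.

Definition CompF (C D E : Category) (G : Functor D E) (F : Functor C D)
  : Functor C E.
Proof.
  refine {| fobj := fun a => G (F a);
            fmap := fun a b f => fmap G (fmap F f) |}.
  - intros a. rewrite !fmap_id. reflexivity.
  - intros a b c g f. rewrite !fmap_comp. reflexivity.
Defined.

Record NatTrans (C D : Category) (F G : Functor C D) := {
  comp_nt :> forall a, Hom (F a) (G a);
  naturality : forall a b (f : Hom a b),
      comp_nt b \o fmap F f = fmap G f \o comp_nt a
}.

Definition is_nat_iso (C D : Category) (F G : Functor C D)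
  (t : NatTrans F G) : Prop := forall a, is_iso (t a).

Definition fully_faithful (C D : Category) (F : Functor C D) : Prop :=
  forall a b, exists g : Hom (F a) (F b) -> Hom a b,
    (forall f, g (fmap F f) = f) /\ (forall h, fmap F (g h) = h).

Record Adjunction (C D : Category) (Lf : Functor C D) (Rf : Functor D C) := {
  adj_unit : NatTrans (IdF C) (CompF Rf Lf);
  adj_counit : NatTrans (CompF Lf Rf) (IdF D);
  triangle_L : forall c, adj_counit (Lf c) \o fmap Lf (adj_unit c) = cid (Lf c);
  triangle_R : forall d, fmap Rf (adj_counit d) \o adj_unit (Rf d) = cid (Rf d)
}.

(* Main.v *)
Require Import Defs.
Set Implicit Arguments.

Lemma iso_comp (C : Category) (x y z : C) (f : Hom x y) (g : Hom y z) :
  is_iso f -> is_iso g -> is_iso (g \o f).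
Proof.
  intros [f' [Hf1 Hf2]] [g' [Hg1 Hg2]].
  exists (f' \o g'); split.
  - rewrite comp_assoc, <- (comp_assoc f' g' g), Hg1, comp_id_r. exact Hf1.
  - rewrite comp_assoc, <- (comp_assoc g f f'), Hf2, comp_id_r. exact Hg2.
Qed.

Lemma ff_inj (A B : Category) (F : Functor A B) (HFF : fully_faithful F)
  (a b : A) (f g : Hom a b) : fmap F f = fmap F g -> f = g.
Proof.
  intros H. destruct (HFF a b) as [pre [H1 _]].
  rewrite <- (H1 f), <- (H1 g), H. reflexivity.
Qed.

Lemma transp_inj (A B : Category) (F : Functor A B) (L : Functor B A)
  (adj : Adjunction L F) (b : B) (x : A) (h1 h2 : Hom (L b) x) :
  fmap F h1 \o adj_unit adj b = fmap F h2 \o adj_unit adj b -> h1 = h2.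
Proof.
  intros H.
  assert (E : forall h : Hom (L b) x,
    h = adj_counit adj x \o fmap L (fmap F h \o adj_unit adj b)).
  { intros h. rewrite fmap_comp, comp_assoc.
    pose proof (naturality (adj_counit adj) h) as N. cbn in N.
    cbn. rewrite N, <- comp_assoc. pose proof (triangle_L adj b) as T. cbn in T. rewrite T, comp_id_r. reflexivity. }
  rewrite (E h1), (E h2), H. reflexivity.
Qed.

Lemma counit_iso (A B : Category) (F : Functor A B) (L : Functor B A)
  (adj : Adjunction L F) (HFF : fully_faithful F) (a : A) :
  is_iso (adj_counit adj a).
Proof.
  destruct (HFF a (L (F a))) as [pre [H1 H2]].
  exists (pre (adj_unit adj (F a))). split.
  - apply (transp_inj adj). rewrite fmap_comp, fmap_id, comp_id_l.
    cbn. rewrite H2, <- comp_assoc.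
    pose proof (triangle_R adj a) as T. cbn in T. rewrite T, comp_id_r.
    reflexivity.
  - apply (ff_inj HFF). rewrite fmap_comp, fmap_id, H2.
    pose proof (triangle_R adj a) as T. cbn in T. exact T.
Qed.

Lemma Lunit_iso (A B : Category) (F : Functor A B) (L : Functor B A)
  (adj : Adjunction L F) (HFF : fully_faithful F) (b : B) :
  is_iso (fmap L (adj_unit adj b)).
Proof.
  destruct (counit_iso adj HFF (L b)) as [g [G1 G2]].
  pose proof (triangle_L adj b) as T. cbn in T.
  assert (E : fmap L (adj_unit adj b) = g).
  { cbn in G1, G2.
    transitivity ((g \o adj_counit adj (L b)) \o fmap L (adj_unit adj b)).
    - cbn. rewrite G1, comp_id_l. reflexivity.
    - cbn. rewrite <- comp_assoc, T, comp_id_r. reflexivity. }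
  exists (adj_counit adj (L b)). split.
  - exact T.
  - rewrite E. exact G1.
Qed.

Theorem proposition3p7 (A B : Category) (F : Functor A B)
  (L R : Functor B A)
  (adjL : Adjunction L F)   (* L ⊣ F, unit eta_L : id_B -> F L *)
  (adjR : Adjunction F R)   (* F ⊣ R, unit eta_R : id_A -> R F *)
  (* F is exceptional: fully faithful with both adjoints *)
  (HFF : fully_faithful F)
  (* F is exceptionally Frobenius: some isomorphism R ≅ L *)
  (HFrob : exists t : NatTrans R L, is_nat_iso t)
  (* the inverse of the (invertible) unit eta_R *)
  (etaRinv : forall a : A, Hom (R (F a)) a)
  (HetaRinv : forall a : A,
      etaRinv a \o adj_unit adjR a = cid a /\
      adj_unit adjR a \o etaRinv a = cid (R (F a))) :
  (* phi_b := (eta_R^{-1} L)_b ∘ (R eta_L)_b : R b -> R F L b -> L b *)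
  forall b : B, is_iso (etaRinv (L b) \o fmap R (adj_unit adjL b)).
Proof.
  intros b. destruct HFrob as [t Ht].
  apply iso_comp.
  - destruct (Ht (F (L b))) as [ty' [T1 T2]].
    assert (E : fmap R (adj_unit adjL b)
              = ty' \o (fmap L (adj_unit adjL b) \o t b)).
    { rewrite <- (naturality t). rewrite comp_assoc. cbn in T1 |- *.
      rewrite T1, comp_id_l. reflexivity. }
    rewrite E. apply iso_comp.
    + apply iso_comp. apply Ht. apply (Lunit_iso adjL HFF).
    + exists (t (F (L b))). split; assumption.
  - exists (adj_unit adjR (L b)). destruct (HetaRinv (L b)). split; assumption.
Qed.
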